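(* There exists a numerical constant $c>0$ such that, for every time horizon $T\in\mathbb N$, every algorithm for the full-feedback brokerage problem satisfies \[\sup_\nu R_T^\nu\ge c\sqrt T,\] where the supremum is over all probability distributions $\nu$ on $[0,1]$.
   Context: Brokerage setting: for $p,v_1,v_2\in[0,1]$ let $\mathrm{gft}(p,v_1,v_2):=(v_1\vee v_2-v_1\wedge v_2)\,\mathbb I\{v_1\wedge v_2\le p\le v_1\vee v_2\}$ ($\vee,\wedge$ = max, min). Valuations $V_1,V_2,\dots$ are i.i.d. with law $\nu$ on $[0,1]$; at round $t$ the algorithm posts $P_t\in[0,1]$ and obtains $\mathrm{GFT}_t(P_t)$ with $\mathrm{GFT}_t(q):=\mathrm{gft}(q,V_{2t-1},V_{2t})$. A full-feedback algorithm chooses $P_t$ as a measurable function of $V_1,\dots,V_{2(t-1)}$ (and possibly internal randomness independent of the valuations). $R_T^\nu:=\sup_{p\in[0,1]}\mathbb E[\sum_{t=1}^T\mathrm{GFT}_t(p)]-\mathbb E[\sum_{t=1}^T\mathrm{GFT}_t(P_t)]$ when valuations have law $\nu$. *)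

(* Defs.v *)
From HB Require Import structures.
From mathcomp Require Import all_boot all_order all_algebra.
From mathcomp Require Import all_classical all_reals all_analysis.
Set Implicit Arguments. Unset Strict Implicit. Unset Printing Implicit Defensive.
Import Order.TTheory GRing.Theory Num.Theory.
Local Open Scope classical_set_scope.
Local Open Scope ring_scope.

Section Brokerage.
Variable R : realType.

Definition gft (p v1 v2 : R) : R :=
  if (Num.min v1 v2 <= p) && (p <= Num.max v1 v2)
  then Num.max v1 v2 - Num.min v1 v2 else 0.

(* Expectation of F(V_1,...,V_n) for V_1,...,V_n i.i.d. with law nu,
   written as the iterated integral over the product measure nu^{(x) n}
   (V_1 is the head of the sequence). *)
Fixpoint Eiid (nu : probability R R) (n : nat) (F : seq R -> \bar R) : \bar R :=
  match n with
  | 0 => F [::]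
  | n.+1 => (\int[nu]_x Eiid nu n (fun s => F (x :: s)))%E
  end.

(* Total gain from trade over T rounds given the valuation sequence s
   (round k+1, k = 0..T-1, uses V_{2k+1} = s`_(2k), V_{2k+2} = s`_(2k+1))
   and the posted prices price k. *)
Definition total_gft (T : nat) (price : nat -> R) (s : seq R) : R :=
  \sum_(k < T) gft (price k) (nth 0 s (2 * k)) (nth 0 s (2 * k).+1).

(* A full-feedback algorithm: internal randomness u ~ mu on U, and the
   price at round k+1 is f k u (V_1,...,V_{2k}). *)
Definition regret (T : nat) (dU : measure_display) (U : measurableType dU)
  (mu : probability U R) (f : nat -> U -> seq R -> R) (nu : probability R R)
  : \bar R :=
  (ereal_sup [set Eiid nu (2 * T) (fun s => (total_gft T (fun _ => p) s)%:E)
             | p in `[0%R, 1%R] : set R]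
   - \int[mu]_u Eiid nu (2 * T)
        (fun s => (total_gft T (fun k => f k u (take (2 * k) s)) s)%:E))%E.

End Brokerage.

(* Main.v *)
Require Import Defs.
From HB Require Import structures.
From mathcomp Require Import all_boot all_order all_algebra.
From mathcomp Require Import all_classical all_reals all_analysis.
From mathcomp Require Import measurable_realfun zify ring lra.
Set Implicit Arguments. Unset Strict Implicit. Unset Printing Implicit Defensive.
Import Order.TTheory GRing.Theory Num.Theory.
Local Open Scope classical_set_scope.
Local Open Scope ring_scope.


Section Nu.
Context (R : realType) (a : R) (a0 : 0 <= a) (a1 : a <= 1).

Definition wt (i : nat) : R :=
  match i with 0 => a ^+ 2 | 1 | 2 => a * (1 - a) | _ => (1 - a) ^+ 2 end.
Lemma wt_ge0 i : 0 <= wt i.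
Proof. by case: i => [|[|[|i]]] /=; rewrite ?sqr_ge0 // mulr_ge0 // subr_ge0. Qed.
Definition wtn i : {nonneg R} := NngNum (wt_ge0 i).
Definition pt (i : nat) : R := i%:R / 3.

Definition nuf := msum (fun i => mscale (wtn i) (@dirac _ R (pt i) R)) 4.
HB.instance Definition _ := Measure.on nuf.
Lemma nuf_setT : nuf setT = 1%E.
Proof.
rewrite /nuf /msum /mscale /= !big_ord_recr big_ord0 /=.
rewrite /mscale/= !diracT !mule1 add0e -!EFinD.
congr (_%:E); rewrite /wt; ring.
Qed.
HB.instance Definition _ := Measure_isProbability.Build _ _ _ nuf nuf_setT.
Definition nu : probability R R := nuf.

Lemma int_meas (g : R -> \bar R) : measurable_fun setT g -> (forall x, 0 <= g x)%E ->
  (\int[nu]_x g x = \sum_(i < 4) (wt i)%:E * g (pt i))%E.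
Proof.
move=> mg g0; rewrite /nu /nuf ge0_integral_measure_sum //.
apply: eq_bigr => i _; rewrite ge0_integral_mscale //= integral_dirac //.
by rewrite diracT mul1e.
Qed.
End Nu.

Section Le.
Context d (T : measurableType d) (R : realType) (mu : {measure set T -> \bar R}).
Lemma le_int_any (f g : T -> \bar R) : (forall x, 0 <= f x)%E -> (forall x, f x <= g x)%E ->
  (\int[mu]_x f x <= \int[mu]_x g x)%E.
Proof.
move=> f0 fg.
have g0 x : (0 <= g x)%E by apply: le_trans (f0 x) (fg x).
rewrite !ge0_integralTE //; apply: ereal_sup_le => _ [h hf <-]; exists h => //.
by move=> x; apply: le_trans (hf x) (fg x).
Qed.
End Le.


Section Disc.
Context (R : realType) (a : R) (a0 : 0 <= a) (a1 : a <= 1).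

Lemma pt_eq (i j : nat) : (pt R i == pt R j) = (i == j).
Proof.
rewrite /pt; apply/idP/idP => [/eqP H|/eqP->//].
have : (i%:R : R) = j%:R.
  by have := congr1 (fun x => x * 3) H; rewrite !mulfVK // pnatr_eq0.
by move/eqP; rewrite eqr_nat.
Qed.

Definition gsel (h : R -> \bar R) (e : \bar R) (x : R) : \bar R :=
  if x == pt R 0 then h (pt R 0) else if x == pt R 1 then h (pt R 1) else
  if x == pt R 2 then h (pt R 2) else if x == pt R 3 then h (pt R 3) else e.

Lemma gsel_meas h e : measurable_fun setT (gsel h e).
Proof.
have mq c : measurable_fun setT (fun x : R => x == c).
  by apply: (@measurable_fun_eqr _ R R setT id (cst c)).
rewrite /gsel.
by repeat (apply: measurable_fun_ifT; [exact: mq|exact: measurable_cst|]); exact: measurable_cst.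
Qed.

Lemma gsel_pt h e (i : 'I_4) : gsel h e (pt R i) = h (pt R i).
Proof. by case: i => [[|[|[|[|i]]]] Hi] //=; rewrite /gsel !pt_eq. Qed.

Lemma int_any (h : R -> \bar R) : (forall x, 0 <= h x)%E ->
  (\int[nu a0 a1]_x h x = \sum_(i < 4) (wt a i)%:E * h (pt R i))%E.
Proof.
move=> h0.
have g0 e : (0 <= e)%E -> forall x, (0 <= gsel h e x)%E.
  by move=> e0 x; rewrite /gsel; repeat case: ifP => _ //.
have gv e : (0 <= e)%E -> (\int[nu a0 a1]_x gsel h e x = \sum_(i < 4) (wt a i)%:E * h (pt R i))%E.
  move=> e0; rewrite int_meas //; [|exact: gsel_meas|exact: g0].
  by apply: eq_bigr => i _; rewrite gsel_pt.
apply/eqP; rewrite eq_le; apply/andP; split.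
  rewrite -(gv +oo%E) //; apply: le_int_any => // x.
  by rewrite /gsel; repeat case: ifP => [/eqP->//|_]; exact: leey.
rewrite -(gv 0%E) //; apply: le_int_any => //; first exact: g0.
by move=> x; rewrite /gsel; repeat case: ifP => [/eqP->//|_].
Qed.
End Disc.


Section ES.
Context (R : realType) (w : nat -> R).

Fixpoint ES (n : nat) (F : seq R -> R) : R :=
  match n with
  | 0 => F [::]
  | n'.+1 => \sum_(i < 4) w i * ES n' (fun s => F (pt R i :: s))
  end.

Lemma eq_ES n F G : (forall s, size s = n -> F s = G s) -> ES n F = ES n G.
Proof.
elim: n F G => [|n IH] F G H /=; first exact: H.
by apply: eq_bigr => i _; congr (_ * _); apply: IH => s Hs; apply: H => /=; rewrite Hs.
Qed.

Lemma ES_cat m n F :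
  ES (m + n) F = ES m (fun s1 => ES n (fun s2 => F (s1 ++ s2))).
Proof.
elim: m F => [|m IH] F //=.
by apply: eq_bigr => i _; rewrite IH.
Qed.

Lemma ES_add n F G : ES n (fun s => F s + G s) = ES n F + ES n G.
Proof.
elim: n F G => [|n IH] F G //=.
rewrite -big_split /=; apply: eq_bigr => i _; by rewrite IH mulrDr.
Qed.

Lemma ES_scale n c F : ES n (fun s => c * F s) = c * ES n F.
Proof.
elim: n F => [|n IH] F //=.
rewrite mulr_sumr; apply: eq_bigr => i _; rewrite IH; ring.
Qed.

Lemma ES_sum n (I : nat) (F : nat -> seq R -> R) :
  ES n (fun s => \sum_(k < I) F k s) = \sum_(k < I) ES n (F k).
Proof.
elim: I F => [|I IH] F.
  rewrite big_ord0; under eq_ES do rewrite big_ord0.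
  elim: (n) => [|m IH] //=; rewrite big1 // => i _; by rewrite IH mulr0.
under eq_ES do rewrite big_ord_recr /=.
by rewrite ES_add IH big_ord_recr.
Qed.

Hypothesis w0 : forall i, 0 <= w i.
Hypothesis w1 : \sum_(i < 4) w i = 1.

Lemma ES_cst n c : ES n (fun _ => c) = c.
Proof.
elim: n => [|n IH] //=.
under eq_bigr do rewrite IH.
by rewrite -mulr_suml w1 mul1r.
Qed.

Lemma ES_mono n F G : (forall s, size s = n -> F s <= G s) -> ES n F <= ES n G.
Proof.
elim: n F G => [|n IH] F G H /=; first exact: H.
apply: ler_sum => i _; apply: ler_wpM2l => //; apply: IH => s Hs; apply: H.
by rewrite /= Hs.
Qed.

Lemma ES_ge0 n F : (forall s, size s = n -> 0 <= F s) -> 0 <= ES n F.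
Proof. by move=> H; rewrite -(ES_cst n 0); apply: ES_mono. Qed.

End ES.


Section J.
Context (R : realType) (wp wm : nat -> R).

Fixpoint J (n : nat) (c d : R) (K : R -> R -> seq R -> R) : R :=
  match n with
  | 0 => K c d [::]
  | n'.+1 => \sum_(i < 4) J n' (c * wp i) (d * wm i) (fun c d s => K c d (pt R i :: s))
  end.

Lemma J_ESp n c d F : c * ES wp n F = J n c d (fun c' _ s => c' * F s).
Proof.
elim: n c d F => [|n IH] c d F //=.
rewrite mulr_sumr; apply: eq_bigr => i _; by rewrite -IH mulrA.
Qed.

Lemma J_ESm n c d F : d * ES wm n F = J n c d (fun _ d' s => d' * F s).
Proof.
elim: n c d F => [|n IH] c d F //=.
rewrite mulr_sumr; apply: eq_bigr => i _; by rewrite -IH mulrA.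
Qed.

Lemma J_add n c d K1 K2 :
  J n c d (fun c d s => K1 c d s + K2 c d s) = J n c d K1 + J n c d K2.
Proof.
elim: n c d K1 K2 => [|n IH] c d K1 K2 //=.
by rewrite -big_split; apply: eq_bigr => i _; rewrite IH.
Qed.

Lemma J_scale n c d e K :
  J n c d (fun c d s => e * K c d s) = e * J n c d K.
Proof.
elim: n c d K => [|n IH] c d K //=.
by rewrite mulr_sumr; apply: eq_bigr => i _; rewrite IH.
Qed.

Hypothesis wp0 : forall i, 0 <= wp i.
Hypothesis wm0 : forall i, 0 <= wm i.
Hypothesis wp1 : \sum_(i < 4) wp i = 1.
Hypothesis wm1 : \sum_(i < 4) wm i = 1.

Lemma J_mono n c d K1 K2 : 0 <= c -> 0 <= d ->
  (forall c' d' s, 0 <= c' -> 0 <= d' -> size s = n -> K1 c' d' s <= K2 c' d' s) ->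
  J n c d K1 <= J n c d K2.
Proof.
elim: n c d K1 K2 => [|n IH] c d K1 K2 c0 d0 H /=; first exact: H.
apply: ler_sum => i _; apply: IH; rewrite ?mulr_ge0 // => c' d' s c'0 d'0 Hs.
by apply: H => //=; rewrite Hs.
Qed.

Lemma J_c n c d : J n c d (fun c' _ _ => c') = c.
Proof.
elim: n c d => [|n IH] c d //=.
under eq_bigr do rewrite IH.
by rewrite -mulr_sumr wp1 mulr1.
Qed.

Lemma J_d n c d : J n c d (fun _ d' _ => d') = d.
Proof.
elim: n c d => [|n IH] c d //=.
under eq_bigr do rewrite IH.
by rewrite -mulr_sumr wm1 mulr1.
Qed.

Variable r : R.
Hypothesis r0 : 0 <= r.
Hypothesis wpm : forall i, (i < 4)%N -> wp i * wm i = r ^+ 2.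

Lemma amgm_base (c d rho t : R) : 0 <= c -> 0 <= d -> 0 <= rho -> 0 < t ->
  c * d = rho ^+ 2 -> 2 * rho * t <= t ^+ 2 * Num.min c d + Num.max c d.
Proof.
move=> c0 d0 rh0 t0 cd.
wlog cled : c d c0 d0 cd / c <= d.
  move=> Hw; have [h|h] := boolP (c <= d); first exact: Hw.
  rewrite minC maxC; apply: Hw => //; first by rewrite mulrC.
  by rewrite -ltNge in h; exact: ltW.
rewrite (min_idPl cled) (max_idPr cled).
have [c00|cpos] := eqVneq c 0.
  move: cd; rewrite c00 mul0r => /esym/eqP; rewrite sqrf_eq0 => /eqP->; nra.
have cp : 0 < c by rewrite lt_def cpos.
have : 0 <= c * (t ^+ 2 * c + d - 2 * rho * t) by rewrite [X in _ <= X](_ : _ = (t * c - rho) ^+ 2); [exact: sqr_ge0|rewrite sqrrB -cd; ring].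
rewrite pmulr_rge0 //; lra.
Qed.

Lemma J_amgm n (c d rho t : R) : 0 <= c -> 0 <= d -> 0 <= rho -> 0 < t ->
  c * d = rho ^+ 2 ->
  2 * rho * t * (4 * r) ^+ n <=
    t ^+ 2 * J n c d (fun c d _ => Num.min c d) + J n c d (fun c d _ => Num.max c d).
Proof.
elim: n c d rho => [|n IH] c d rho c0 d0 rh0 t0 cd /=.
  by rewrite expr0 mulr1; apply: amgm_base.
rewrite mulr_sumr -big_split /=.
rewrite (_ : 2 * rho * t * (4 * r) ^+ n.+1 = \sum_(i < 4) (2 * (rho * r) * t * (4 * r) ^+ n)); last first.
  by rewrite !big_ord_recr big_ord0 /= exprS; ring.
apply: ler_sum => i _; apply: IH; rewrite ?mulr_ge0 //.
rewrite (_ : c * wp i * (d * wm i) = (c * d) * (wp i * wm i)); last by ring.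
by rewrite cd wpm // exprMn.
Qed.

Lemma J_aff n : 0 < 4 * r ->
  ((4 * r) ^+ n) ^+ 2 / 2 <= J n 1 1 (fun c d _ => Num.min c d).
Proof.
move=> r4.
set h := (4 * r) ^+ n.
have h0 : 0 < h by rewrite exprn_gt0.
have := @J_amgm n 1 1 1 (2 / h) ler01 ler01 ler01.
rewrite divr_gt0 // => /(_ isT); rewrite mulr1 expr1n => /(_ erefl).
have Jmax : J n 1 1 (fun c d _ => Num.max c d) <= 2.
  apply: (@le_trans _ _ (J n 1 1 (fun c d _ => c + d))).
    apply: J_mono; rewrite ?ler01 // => c' d' _ c0 d0 _.
    by case: (lerP c' d') => _; lra.
  by rewrite J_add J_c J_d; lra.
move=> H.
have hne : h != 0 by rewrite gt_eqF.
have e1 : 2 * (2 / h) * h = 4 by field.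
set A := J n 1 1 (fun c d _ => Num.min c d) in H *.
have : 2 <= (2 / h) ^+ 2 * A.
rewrite -/h mulr1 in H; lra.
rewrite expr_div_n => H2.
have : 2 * h ^+ 2 <= 2 ^+ 2 * A.
  have := ler_wpM2r (ltW (exprn_gt0 2 h0)) H2.
  by rewrite mulrAC divfK // expf_neq0 // gt_eqF.
lra.
Qed.
End J.


Section G.
Context (R : realType).

Lemma gft_spec (p x y : R) :
  ((x <= y /\ Num.min x y = x /\ Num.max x y = y) \/ (y < x /\ Num.min x y = y /\ Num.max x y = x)) /\
  ((Num.min x y <= p /\ p <= Num.max x y /\ gft p x y = Num.max x y - Num.min x y) \/
   ((p < Num.min x y \/ Num.max x y < p) /\ gft p x y = 0)).
Proof.
split.
  by case: (lerP x y) => h; [left|right].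
rewrite /gft; case: ifP => [/andP[h1 h2]|/negbT]; first by left.
rewrite negb_and -!ltNge => /orP h; right; split => //.
Qed.

Lemma gft_ge0 (p x y : R) : 0 <= gft p x y.
Proof. have := gft_spec p x y; lra. Qed.

Definition supp (x : R) := x = 0 \/ x = 1/3 \/ x = 2/3 \/ x = 1.

Lemma gft_low (p x y : R) : supp x -> supp y -> 0 <= p -> p < 2/3 ->
  gft p x y <= gft (1/3) x y.
Proof.
move=> hx hy p0 p1; have := gft_spec p x y; have := gft_spec (1/3) x y.
rewrite /supp in hx hy; lra.
Qed.
End G.

Section G2.
Context (R : realType).

Lemma pt_val (i : 'I_4) : supp (pt R i).
Proof.
rewrite /supp /pt; case: i => [[|[|[|[|i]]]] Hi] //=; try lra.
Qed.

Definition g (w : nat -> R) (p : R) := ES w 2 (fun s => gft p (nth 0 s 0) (nth 0 s 1)).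

Lemma gE w p : g w p = \sum_(i < 4) w i * \sum_(j < 4) w j * gft p (pt R i) (pt R j).
Proof. rewrite /g /=; apply: eq_bigr => i _; congr (_ * _); by rewrite big_ord_recr big_ord0 /=. Qed.
End G2.

Section G3.
Context (R : realType) (w : nat -> R) (w0 : forall i, 0 <= w i).

Lemma gft_high (p x y : R) : supp x -> supp y -> 2/3 <= p -> p <= 1 ->
  gft p x y <= gft (2/3) x y.
Proof.
move=> hx hy p0 p1; have := gft_spec p x y; have := gft_spec (2/3) x y.
rewrite /supp in hx hy; lra.
Qed.

Lemma g_low p : 0 <= p -> p < 2/3 -> g w p <= g w (1/3).
Proof.
move=> p0 p1; rewrite !gE; apply: ler_sum => i _; apply: ler_wpM2l => //.
apply: ler_sum => j _; apply: ler_wpM2l => //; apply: gft_low => //; exact: pt_val.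
Qed.

Lemma g_high p : 2/3 <= p -> p <= 1 -> g w p <= g w (2/3).
Proof.
move=> p0 p1; rewrite !gE; apply: ler_sum => i _; apply: ler_wpM2l => //.
apply: ler_sum => j _; apply: ler_wpM2l => //; apply: gft_high => //; exact: pt_val.
Qed.

Definition phi (i j : nat) : R :=
  if ((i == 0) && (j == 1)) || ((i == 1) && (j == 0)) then 1/3
  else if ((i == 2) && (j == 3)) || ((i == 3) && (j == 2)) then - (1/3) else 0.

Lemma delta_pt (i j : 'I_4) :
  gft (1/3) (pt R i) (pt R j) - gft (2/3) (pt R i) (pt R j) = phi i j.
Proof.
rewrite /phi /pt.
case: i => [[|[|[|[|i]]]] Hi] //=; case: j => [[|[|[|[|j]]]] Hj] //=;
  match goal with |- gft ?p ?x ?y - gft ?q _ _ = _ =>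
    have := gft_spec p x y; have := gft_spec q x y end; lra.
Qed.
End G3.

Lemma g_diff (R : realType) (w : nat -> R) :
  g w (1/3) - g w (2/3) = 2/3 * (w 0 * w 1 - w 2 * w 3).
Proof.
have -> : g w (1/3) - g w (2/3) = \sum_(i < 4) w i * \sum_(j < 4) w j * phi R i j.
  rewrite !gE -sumrB; apply: eq_bigr => i _; rewrite -mulrBr -sumrB; congr (_ * _).
  by apply: eq_bigr => j _; rewrite -mulrBr delta_pt.
rewrite !big_ord_recr big_ord0 /= /phi /=.
rewrite !big_ord0; ring.
Qed.


Section Dec.
Context (R : realType) (w : nat -> R) (w1 : \sum_(i < 4) w i = 1).

Lemma decomp (T : nat) (P : nat -> seq R -> R) :
  ES w (2 * T) (fun s => total_gft T (fun k => P k (take (2 * k) s)) s) =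
  \sum_(k < T) ES w (2 * k) (fun s1 => g w (P k s1)).
Proof.
rewrite /total_gft (ES_sum w (2 * T) T (fun k s => gft (P k (take (2 * k) s)) (nth 0 s (2 * k)) (nth 0 s (2 * k).+1))).
apply: eq_bigr => [[k Hk]] _ /=.
have -> : (2 * T = 2 * k + (2 + (2 * T - 2 * k - 2)))%N by lia.
rewrite ES_cat; apply: eq_ES => s1 Hs1; rewrite ES_cat /g.
apply: eq_ES => s2 Hs2.
rewrite -[RHS](ES_cst w1 (2 * T - 2 * k - 2)); apply: eq_ES => s3 _.
rewrite take_size_cat //.
rewrite !nth_cat Hs1 ltnn subnn Hs2 subSnn.
have -> : ((2 * k).+1 < 2 * k)%N = false by lia.
by [].
Qed.
End Dec.


Section W.
Context (R : realType).

Lemma wt_sum1 (a : R) : \sum_(i < 4) wt a i = 1.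
Proof. rewrite !big_ord_recr big_ord0 /= /wt; ring. Qed.

Lemma wt_prod (a : R) i : (i < 4)%N -> wt a i * wt (1 - a) i = (a * (1 - a)) ^+ 2.
Proof. by case: i => [|[|[|[|i]]]] //= _; ring. Qed.

Lemma Eiid_ES (a : R) (a0 : 0 <= a) (a1 : a <= 1) n (F : seq R -> R) :
  (forall s, 0 <= F s) ->
  Eiid (nu a0 a1) n (fun s => (F s)%:E) = (ES (wt a) n F)%:E.
Proof.
elim: n F => [|n IH] F F0 //=.
under eq_integral do rewrite (IH (fun s => F (_ :: s))) //.
rewrite int_any; last first.
  move=> x; rewrite lee_fin; apply: ES_ge0 => //; [exact: wt_ge0|exact: wt_sum1].
rewrite -sumEFin; apply: eq_bigr => i _ //.
Qed.

Lemma nu01 (a : R) (a0 : 0 <= a) (a1 : a <= 1) : nu a0 a1 `[0%R, 1%R]%classic = 1%E.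
Proof.
rewrite /nu /= /nuf /msum /mscale /= !big_ord_recr big_ord0 /=.
rewrite /mscale/= !diracE !mem_set; last first.
- by rewrite /= in_itv /= /pt; apply/andP; split; lra.
- by rewrite /= in_itv /= /pt; apply/andP; split; lra.
- by rewrite /= in_itv /= /pt; apply/andP; split; lra.
- by rewrite /= in_itv /= /pt; apply/andP; split; lra.
rewrite !mule1 add0e -!EFinD; congr (_%:E); rewrite /wt; ring.
Qed.
End W.


Section Meas.
Context (R : realType).

Lemma gft_meas (x y : R) : measurable_fun setT (fun p : R => gft p x y).
Proof.
rewrite /gft; apply: measurable_fun_ifT => //.
by apply: measurable_and; apply: measurable_fun_ler.
Qed.

Lemma g_meas (w : nat -> R) : measurable_fun setT (g w).
Proof.
rewrite (_ : g w = fun p => \sum_(i < 4) w i * \sum_(j < 4) w j * gft p (pt R i) (pt R j)).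
  apply: measurable_sum => i; apply: measurable_funM => //.
  apply: measurable_sum => j; apply: measurable_funM => //; exact: gft_meas.
by apply/funext => p; rewrite gE.
Qed.

Lemma ES_meas dU (U : measurableType dU) (w : nat -> R) n (F : U -> seq R -> R) :
  (forall s, size s = n -> measurable_fun setT (fun u => F u s)) ->
  measurable_fun setT (fun u => ES w n (F u)).
Proof.
elim: n F => [|n IH] F HF /=; first exact: HF.
apply: measurable_sum => i; apply: measurable_funM => //.
by apply: (IH (fun u s => F u (pt R i :: s))) => s Hs; apply: HF => /=; rewrite Hs.
Qed.
End Meas.

Section Alg.
Context (R : realType) (T : nat) (dU : measure_display) (U : measurableType dU)
  (mu : probability U R) (f : nat -> U -> seq R -> R)
  (hf : forall k : nat,
        measurable_fun setT (fun p : U * (2 * k).-tuple R => f k p.1 (tval p.2)))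
  (hb : forall (k : nat) (u : U) (s : (2 * k).-tuple R), 0 <= f k u (tval s) <= 1).

Lemma f_meas k s : size s = (2 * k)%N -> measurable_fun setT (fun u => f k u s).
Proof.
move=> Hs; have Hs' : size s == (2 * k)%N by apply/eqP.
have hk := @hf k; exact: (measurable_fun_pair1 (Tuple Hs') hk).
Qed.

Lemma f01 k u s : size s = (2 * k)%N -> 0 <= f k u s <= 1.
Proof. move=> Hs; have Hs' : size s == (2 * k)%N by apply/eqP.
exact: (@hb k u (Tuple Hs')). Qed.

Definition Aalg (w : nat -> R) (u : U) : R :=
  \sum_(k < T) ES w (2 * k) (fun s => g w (f k u s)).

Lemma Aalg_meas w : measurable_fun setT (Aalg w).
Proof.
apply: measurable_sum => k; apply: ES_meas => s Hs.
exact: (measurableT_comp (g_meas w) (f_meas Hs)).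
Qed.

Lemma tg_ge0 P (s : seq R) : 0 <= total_gft T P s.
Proof. by apply: sumr_ge0 => k _; exact: gft_ge0. Qed.

Lemma regret_ge (a : R) (a0 : 0 <= a) (a1 : a <= 1) p : 0 <= p -> p <= 1 ->
  ((T%:R * g (wt a) p)%:E - \int[mu]_u (Aalg (wt a) u)%:E <= regret T mu f (nu a0 a1))%E.
Proof.
move=> p0 p1; rewrite /regret; apply: leeB.
  apply: ereal_sup_ubound; exists p; first by rewrite /= in_itv /= p0 p1.
  rewrite Eiid_ES; last by move=> s; exact: tg_ge0.
  rewrite (decomp (wt_sum1 a) T (fun _ _ => p)); congr (_%:E).
  under eq_bigr do rewrite (ES_cst (wt_sum1 a)).
  by rewrite sumr_const card_ord mulr_natl.
apply: le_int_any => u.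
  rewrite Eiid_ES ?lee_fin; last by move=> s; exact: tg_ge0.
  apply: ES_ge0 => *; [exact: wt_ge0|exact: wt_sum1|exact: tg_ge0].
rewrite Eiid_ES; last by move=> s; exact: tg_ge0.
by rewrite (decomp (wt_sum1 a) T (fun k s => f k u s)).
Qed.
End Alg.


Section Key.
Context (R : realType) (a : R) (ah : 1/2 <= a) (a1 : a < 1).

Local Notation wp := (wt a).
Local Notation wm := (wt (1 - a)).
Definition Dl := 2/3 * (wp 0 * wp 1 - wp 2 * wp 3).

Lemma a0 : 0 <= a. Proof. have hA := ah; have hB := a1; lra. Qed.
Lemma a1' : 0 <= 1 - a. Proof. have hA := ah; have hB := a1; lra. Qed.
Lemma a1'' : 1 - a <= 1. Proof. have hA := ah; have hB := a1; lra. Qed.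

Lemma Dl_ge0 : 0 <= Dl.
Proof.
have hA := ah; have hB := a1.
rewrite /Dl /wt (_ : _ * _ = 2/3 * (a * (1 - a)) * (2 * a - 1)); last by ring.
by apply: mulr_ge0; [apply: mulr_ge0; [lra|apply: mulr_ge0; lra]|lra].
Qed.

Lemma gm_diff : g wm (1/3) - g wm (2/3) = - Dl.
Proof. by rewrite g_diff /Dl /wt /=; ring. Qed.

Lemma XY (p : R) : 0 <= p -> p <= 1 ->
  0 <= g wp (1/3) - g wp p /\ 0 <= g wm (2/3) - g wm p /\
  Dl <= (g wp (1/3) - g wp p) + (g wm (2/3) - g wm p).
Proof.
move=> p0 p1; have hA := ah; have hB := a1.
have d1 := g_diff wp; have d2 := gm_diff; have d0 := Dl_ge0.
rewrite -/Dl in d1.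
have w0p : forall i, 0 <= wp i by move=> i; apply: wt_ge0 => //; lra.
have w0m : forall i, 0 <= wm i by move=> i; apply: wt_ge0; lra.
have [plt|pge] := ltP p (2/3).
  have := g_low w0p p0 plt; have := g_low w0m p0 plt; lra.
have := g_high w0p pge p1; have := g_high w0m pge p1; lra.
Qed.

Lemma key n (P : seq R -> R) : (forall s, size s = n -> 0 <= P s <= 1) ->
  ES wp n (fun s => g wp (P s)) + ES wm n (fun s => g wm (P s)) <=
  g wp (1/3) + g wm (2/3) - Dl * (((4 * (a * (1 - a))) ^+ n) ^+ 2 / 2).
Proof.
move=> HP; have hA := ah; have hB := a1.
have w0p : forall i, 0 <= wp i by move=> i; apply: wt_ge0 => //; lra.
have w0m : forall i, 0 <= wm i by move=> i; apply: wt_ge0; lra.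
have e1 : ES wp n (fun s => g wp (1/3) - g wp (P s)) = g wp (1/3) - ES wp n (fun s => g wp (P s)).
  rewrite ES_add (ES_cst (wt_sum1 a)) (_ : (fun s => - g wp (P s)) = (fun s => -1 * g wp (P s))).
    by rewrite ES_scale mulN1r.
  by apply/funext => s; rewrite mulN1r.
have e2 : ES wm n (fun s => g wm (2/3) - g wm (P s)) = g wm (2/3) - ES wm n (fun s => g wm (P s)).
  rewrite ES_add (ES_cst (wt_sum1 (1 - a))) (_ : (fun s => - g wm (P s)) = (fun s => -1 * g wm (P s))).
    by rewrite ES_scale mulN1r.
  by apply/funext => s; rewrite mulN1r.
set X := fun s => g wp (1/3) - g wp (P s).
set Y := fun s => g wm (2/3) - g wm (P s).
have main : Dl * (((4 * (a * (1 - a))) ^+ n) ^+ 2 / 2) <= ES wp n X + ES wm n Y.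
  rewrite -(mul1r (ES wp n X)) -(mul1r (ES wm n Y)).
  rewrite (@J_ESp _ wp wm n 1 1) (@J_ESm _ wp wm n 1 1) -J_add.
  apply: (@le_trans _ _ (J wp wm n 1 1 (fun c d _ => Dl * Num.min c d))).
    rewrite J_scale; apply: ler_wpM2l; first exact: Dl_ge0.
    apply: (@J_aff _ wp wm w0p w0m (wt_sum1 a) (wt_sum1 (1 - a)) (a * (1 - a))).
    - by apply: mulr_ge0; lra.
    - by move=> i Hi; rewrite wt_prod.
    - nra.
  apply: J_mono => //.
  move=> c d s c0 d0 Hs; have [p0 p1] := andP (HP s Hs).
  have := XY p0 p1; rewrite /X /Y => -[hx [hy hxy]].
  case: (lerP c d) => hcd.
    have h1 : 0 <= (d - c) * (g wm (2/3) - g wm (P s)) by apply: mulr_ge0; lra.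
    have h2 : 0 <= c * ((g wp (1/3) - g wp (P s)) + (g wm (2/3) - g wm (P s)) - Dl) by apply: mulr_ge0; lra.
    lra.
  have h1 : 0 <= (c - d) * (g wp (1/3) - g wp (P s)) by apply: mulr_ge0; lra.
  have h2 : 0 <= d * ((g wp (1/3) - g wp (P s)) + (g wm (2/3) - g wm (P s)) - Dl) by apply: mulr_ge0; lra.
  lra.
rewrite e1 e2 in main; lra.
Qed.
End Key.


Lemma bern (R : realType) (x : R) m : 0 <= x -> x <= 1 -> 1 - m%:R * x <= (1 - x) ^+ m.
Proof.
move=> x0 x1; elim: m => [|m IH]; first by rewrite mul0r subr0 expr0.
rewrite exprS -natr1.
have h : (1 - m%:R * x) * (1 - x) <= (1 - x) * (1 - x) ^+ m.
  by rewrite mulrC; apply: ler_wpM2l; lra.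
have : 0 <= m%:R * x * x by apply: mulr_ge0 => //; apply: mulr_ge0.
nra.
Qed.

Lemma eps_facts (R : realType) (T : nat) (s e : R) :
  s = Num.sqrt (T%:R : R) -> e = (8 * s)^-1 ->
  0 <= e /\ e <= 1/8 /\ T%:R * e = s / 8 /\ T%:R * e ^+ 2 <= 1/64 /\ 0 <= s.
Proof.
move=> hs he; subst s e; set s := Num.sqrt _; set e := (8 * s)^-1.
have s0 : 0 <= s by apply: sqrtr_ge0.
have ss : s ^+ 2 = T%:R by rewrite sqr_sqrtr // ler0n.
have [s00|sp] := eqVneq s 0.
  rewrite /e s00 mulr0 invr0; move: ss; rewrite s00 expr0n /= => <-.
  by rewrite !mul0r; lra.
have spos : 0 < s by rewrite lt_def sp s0.
have T1 : 1 <= (T%:R : R).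
  have : (T%:R : R) != 0 by rewrite -ss expf_neq0.
  by rewrite pnatr_eq0 ler1n lt0n.
have s1 : 1 <= s by nra.
split; first by rewrite invr_ge0; lra.
split; first by rewrite /e -(invrK (1/8)) lef_pV2 ?posrE ?invr_gt0; [rewrite invf_div divr1; lra|lra|lra].
split; first by rewrite -ss /e; field.
split => //.
rewrite -ss /e (_ : s ^+ 2 * (8 * s)^-1 ^+ 2 = 1/64); [lra|by field].
Qed.

Lemma g_ge0 (R : realType) (w : nat -> R) p : (forall i, 0 <= w i) -> 0 <= g w p.
Proof.
move=> w0; rewrite gE; apply: sumr_ge0 => i _; apply: mulr_ge0 => //.
by apply: sumr_ge0 => j _; apply: mulr_ge0 => //; exact: gft_ge0.
Qed.

Theorem theorem5p3 (R : realType) :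
  exists c : R, 0 < c /\
  forall (T : nat) (dU : measure_display) (U : measurableType dU)
    (mu : probability U R) (f : nat -> U -> seq R -> R),
    (forall k : nat,
        measurable_fun setT (fun p : U * (2 * k).-tuple R => f k p.1 (tval p.2))) ->
    (forall (k : nat) (u : U) (s : (2 * k).-tuple R),
        0 <= f k u (tval s) <= 1) ->
    ((c * Num.sqrt (T%:R))%:E <=
       ereal_sup [set regret T mu f nu
                 | nu in [set nu : probability R R | nu `[0%R, 1%R]%classic = 1%E]])%E.
Proof.
exists (1/200); split; first lra.
move=> T dU U mu f hf hb.
set s := Num.sqrt (T%:R : R); set e := (8 * s)^-1.
have [e0 [e8 [Te [Te2 s0]]]] := eps_facts (erefl s) (erefl e).
set a := 1/2 + e.
have ah : 1/2 <= a by rewrite /a; lra.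
have a1 : a < 1 by rewrite /a; lra.
have a0 : 0 <= a by lra.
have a1' : a <= 1 by lra.
have b0 : 0 <= 1 - a by lra.
have b1 : 1 - a <= 1 by lra.
have w0p : forall i, 0 <= wt a i by move=> i; exact: wt_ge0.
have w0m : forall i, 0 <= wt (1 - a) i by move=> i; exact: wt_ge0.
have rp : ((T%:R * g (wt a) (1/3))%:E - \int[mu]_u (Aalg T f (wt a) u)%:E
           <= regret T mu f (nu a0 a1'))%E by apply: regret_ge; lra.
have rm : ((T%:R * g (wt (1 - a)) (2/3))%:E - \int[mu]_u (Aalg T f (wt (1 - a)) u)%:E
           <= regret T mu f (nu b0 b1))%E by apply: regret_ge; lra.
have A0 : forall b (b0 : 0 <= b) (b1 : b <= 1) u, 0 <= Aalg T f (wt b) u.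
  move=> b bb0 bb1 u; apply: sumr_ge0 => k _; apply: ES_ge0 => //.
  - by move=> i; exact: wt_ge0.
  - exact: wt_sum1.
  - by move=> s1 _; apply: g_ge0 => i; exact: wt_ge0.
have mA : forall w, measurable_fun setT (fun u => (Aalg T f w u)%:E).
  by move=> w; apply/measurable_EFinP; exact: Aalg_meas.
set D0 := Dl a.
set M := g (wt a) (1/3) + g (wt (1 - a)) (2/3).
set B := T%:R * M - T%:R * D0 * (3/8).
have hpt : forall u, Aalg T f (wt a) u + Aalg T f (wt (1 - a)) u <= B.
  move=> u; rewrite /Aalg -big_split /=.
  rewrite (_ : B = \sum_(k < T) (M - D0 * (3/8))); last first.
    by rewrite sumr_const card_ord -mulr_natl /B; ring.
  apply: ler_sum => [[k Hk]] _ /=.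
  have HP : forall s1, size s1 = (2 * k)%N -> 0 <= f k u s1 <= 1.
    by move=> s1 Hs; exact: f01 Hs.
  apply: le_trans (key ah a1 HP) _.
  rewrite /M; apply: lerD => //; rewrite lerN2; apply: ler_wpM2l; first exact: Dl_ge0.
  rewrite -exprM (_ : 4 * (a * (1 - a)) = 1 - 4 * e ^+ 2); last by rewrite /a; field.
  have := @bern R (4 * e ^+ 2) (2 * k * 2) (mulr_ge0 (ler0n _ 4) (sqr_ge0 e)) ltac:(nra).
  have : ((2 * k * 2)%:R : R) <= 4%:R * T%:R.
    by rewrite -natrM ler_nat; lia.
  move=> HK HB.
  have : ((2 * k * 2)%:R : R) * (4 * e ^+ 2) <= 4%:R * T%:R * (4 * e ^+ 2).
    by apply: ler_wpM2r => //; apply: mulr_ge0 => //; exact: sqr_ge0.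
  lra.
set Ip := (\int[mu]_u (Aalg T f (wt a) u)%:E)%E.
set Im := (\int[mu]_u (Aalg T f (wt (1 - a)) u)%:E)%E.
have Ip0 : (0 <= Ip)%E by apply: integral_ge0 => u _; rewrite lee_fin; exact: A0.
have Im0 : (0 <= Im)%E by apply: integral_ge0 => u _; rewrite lee_fin; exact: A0.
have Isum : (Ip + Im <= B%:E)%E.
  rewrite /Ip /Im -ge0_integralD //; last 2 first.
  - by move=> u _; rewrite lee_fin; exact: A0.
  - by move=> u _; rewrite lee_fin; exact: A0.
  apply: le_trans (@le_int_any _ _ _ mu _ (fun _ => B%:E) _ _) _.
  - by move=> u; rewrite -EFinD lee_fin; apply: addr_ge0; exact: A0.
  - by move=> u; rewrite -EFinD lee_fin; exact: hpt.
  by rewrite integral_cst //= probability_setT mule1.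
have Ipf : Ip \is a fin_num.
  by rewrite ge0_fin_numE //; apply: le_lt_trans (ltry B); apply: le_trans Isum; exact: leeDl.
have Imf : Im \is a fin_num.
  by rewrite ge0_fin_numE //; apply: le_lt_trans (ltry B); apply: le_trans Isum; exact: leeDr.
have Ipe : Ip = (fine Ip)%:E by rewrite fineK.
have Ime : Im = (fine Im)%:E by rewrite fineK.
set ip := fine Ip in Ipe; set im := fine Im in Ime.
have Dlb : 5/16 * e <= D0.
  rewrite /D0 /Dl /wt /= /a.
  rewrite (_ : 2/3 * _ = 4/3 * e * (1/4 - e ^+ 2)); last by field.
  have : 0 <= e * (1/64 - e ^+ 2) by apply: mulr_ge0 => //; nra.
  nra.
have TD : T%:R * (5/16 * e) <= T%:R * D0 by apply: ler_wpM2l => //; exact: ler0n.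
have Sp : [set nu : probability R R | nu `[0%R, 1%R]%classic = 1%E] (nu a0 a1') by exact: nu01.
have Sm : [set nu : probability R R | nu `[0%R, 1%R]%classic = 1%E] (nu b0 b1) by exact: nu01.
case: (leP ((1/200 * s)%:E) (regret T mu f (nu a0 a1'))) => [h|h].
  by apply: le_trans h _; apply: ereal_sup_ubound; exists (nu a0 a1').
apply: le_trans (_ : regret T mu f (nu b0 b1) <= _)%E; last first.
  by apply: ereal_sup_ubound; exists (nu b0 b1).
apply: le_trans rm; rewrite -/Im Ime -EFinB lee_fin.
have h2 : (T%:R * g (wt a) (1 / 3) - ip < 1/200 * s).
  by rewrite -lte_fin EFinB -Ipe; apply: le_lt_trans h.
move: Isum; rewrite Ipe Ime -EFinD lee_fin => Isum.
rewrite /B /M in Isum.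
lra.
Qed.
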